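(* Let $k\ge2$ be an integer and let $n\ge4k-2$ be an even integer. Let $P$ be the property of being $k$-edge-connected. Then the number of $(P,n)$-sinks, i.e. $|S(P,n)|$, is at least $p(k-1)$, where $p$ denotes the integer partition function.
   Context: Graphs are finite and simple. A graphical sequence of length $n$ is a nondecreasing integer sequence that is the degree sequence of some graph (a realization). For nondecreasing sequences, $\pi'\ge\pi$ ($\pi'$ majorizes $\pi$) means termwise $\ge$. A graphical sequence is forcibly $P$ if every realization has property $P$. Let $G_n$ be the poset of graphical sequences of length $n$ under majorization and $\overline{P_n}$ the subposet of those not forcibly $P$; $S(P,n)$ is the set of maximal elements of $\overline{P_n}$. $p(r)$ is the number of partitions of the integer $r$. *)

(* Defs.v *)
From mathcomp Require Import all_boot.
Set Implicit Arguments. Unset Strict Implicit. Unset Printing Implicit Defensive.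

Definition simple_graph (n : nat) (g : rel 'I_n) : Prop :=
  (forall u v, g u v = g v u) /\ (forall u, ~~ g u u).

Definition deg (n : nat) (g : rel 'I_n) (u : 'I_n) : nat := #|[pred v | g u v]|.

Definition degseq (n : nat) (g : rel 'I_n) : seq nat :=
  sort leq [seq deg g u | u <- enum 'I_n].

Definition realizes (n : nat) (g : rel 'I_n) (d : seq nat) : Prop :=
  simple_graph g /\ degseq g = d.

(* graphical sequences of length n (nondecreasing by construction of degseq) *)
Definition graphical (n : nat) (d : seq nat) : Prop :=
  exists g : rel 'I_n, realizes g d.

Definition majorizes (d' d : seq nat) : Prop :=
  size d' = size d /\ all2 leq d d'.

Definition graph_property := forall n : nat, rel 'I_n -> Prop.

Definition forcibly (P : graph_property) (n : nat) (d : seq nat) : Prop :=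
  forall g : rel 'I_n, realizes g d -> P n g.

Definition not_forcibly (P : graph_property) (n : nat) (d : seq nat) : Prop :=
  graphical n d /\ ~ forcibly P n d.

Definition sink (P : graph_property) (n : nat) (d : seq nat) : Prop :=
  not_forcibly P n d /\
  (forall d', not_forcibly P n d' -> majorizes d' d -> d' = d).

Definition connected (n : nat) (g : rel 'I_n) : Prop :=
  forall u v : 'I_n, connect g u v.

Definition remove_edges (n : nat) (g : rel 'I_n) (F : {set {set 'I_n}}) : rel 'I_n :=
  fun u v => g u v && ([set u; v] \notin F).

Definition k_edge_connected (k : nat) : graph_property :=
  fun n g => forall F : {set {set 'I_n}}, #|F| < k -> connected (remove_edges g F).

(* integer partition function p(r): partitions of r correspond bijectively to
   nonincreasing r-tuples of numbers in [0, r] summing to r (pad with zeros). *)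
Definition partition_number (r : nat) : nat :=
  #|[set t : r.-tuple 'I_r.+1 |
       sorted geq [seq val i | i <- t] && (sumn [seq val i | i <- t] == r)]|.

(* Main.v *)
Require Import Defs.
From mathcomp Require Import all_boot zify.
From Stdlib Require Import Classical.
Set Implicit Arguments. Unset Strict Implicit.

Lemma card_iota n (p : pred nat) : #|[pred v : 'I_n | p v]| = count p (iota 0 n).
Proof.
rewrite -val_enum_ord count_map cardE /enum_mem size_filter.
rewrite /enum_mem -enumT /= (@eq_filter _ _ predT) ?filter_predT //.
Qed.

Lemma count_iotaS (p : pred nat) n : count p (iota 0 n.+1) = count p (iota 0 n) + p n.
Proof. by rewrite -addn1 iotaD count_cat /= addn0 add0n. Qed.

Lemma all2_refl (s : seq nat) : all2 leq s s.
Proof. by elim: s => //= x s ->; rewrite leqnn. Qed.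

Lemma all2_trans (a b c : seq nat) : all2 leq a b -> all2 leq b c -> all2 leq a c.
Proof.
elim: a b c => [|x a IH] [|y b] [|z c] //= /andP[h1 h2] /andP[h3 h4].
by rewrite (leq_trans h1 h3) (IH _ _ h2 h4).
Qed.

Lemma all2_sumn (a b : seq nat) : all2 leq a b -> sumn a <= sumn b.
Proof.
elim: a b => [|x a IH] [|y b] //= /andP[h1 h2].
by apply: leq_add => //; apply: IH.
Qed.

Lemma all2_sumn_eq (a b : seq nat) : all2 leq a b -> sumn a = sumn b -> a = b.
Proof.
elim: a b => [|x a IH] [|y b] //= /andP[h1 h2] he.
have h3 := all2_sumn h2.
have exy : x = y by lia.
by rewrite exy (IH b h2) //; lia.
Qed.

Lemma maj_refl d : majorizes d d.
Proof. by split => //; apply: all2_refl. Qed.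

Lemma maj_trans a b c : majorizes a b -> majorizes b c -> majorizes a c.
Proof.
move=> [h1 h2] [h3 h4]; split; first by rewrite h1.
exact: all2_trans h4 h2.
Qed.

Lemma sumn_degseq n (g : rel 'I_n) : sumn (degseq g) = \sum_u deg g u.
Proof.
rewrite /degseq (perm_sumn (permEl (perm_sort _ _))) sumnE big_map.
by rewrite big_enum.
Qed.

Lemma graphical_sum n d : graphical n d -> sumn d <= n * n.
Proof.
move=> [g [_ <-]]; rewrite sumn_degseq.
have -> : n * n = \sum_(u : 'I_n) n by rewrite sum_nat_const card_ord.
apply: leq_sum => u _; rewrite /deg.
by apply: leq_trans (max_card _) _; rewrite card_ord.
Qed.

Lemma sink_above P n d : not_forcibly P n d -> exists s, sink P n s /\ majorizes s d.
Proof.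
move: {2}(n * n - sumn d).+1 (ltnSn (n * n - sumn d)) => N.
elim: N d => [//|N IH] d hN hd.
case: (classic (forall d', not_forcibly P n d' -> majorizes d' d -> d' = d)) => hc.
  by exists d; split => //; apply: maj_refl.
have [d' hd'] := not_all_ex_not _ _ hc.
have [h1 h2] := imply_to_and _ _ hd'.
have [h3 h4] := imply_to_and _ _ h2.
have h5 := all2_sumn (proj2 h3).
have h6 : sumn d != sumn d'.
  apply/eqP => e; apply: h4; apply: esym; exact: all2_sumn_eq (proj2 h3) e.
have h7 := graphical_sum (proj1 h1).
have [s [hs1 hs2]] : exists s, sink P n s /\ majorizes s d'.
  apply: IH h1; lia.
by exists s; split => //; apply: maj_trans hs2 h3.
Qed.
Lemma side_bound n (g : rel 'I_n) (A : {set 'I_n}) (F : {set {set 'I_n}}) :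
  simple_graph g ->
  (forall x y, x \in A -> y \notin A -> g x y -> [set x; y] \in F) ->
  \sum_(x in A) deg g x <= #|A| * #|A|.-1 + #|F|.
Proof.
move=> [gs gi] hF.
pose c x := \sum_(y | (y \notin A) && g x y) 1.
have h1 : forall x, x \in A -> deg g x <= #|A|.-1 + c x.
  move=> x xA; rewrite /deg -(cardID (mem A) [pred y | g x y]).
  apply: leq_add.
    have : #|[predI [pred y | g x y] & mem A]| <= #|A :\ x|.
      apply: subset_leq_card; apply/subsetP => y; rewrite !inE /= => /andP[gxy ->].
      rewrite andbT; apply/eqP => eyx; move: gxy; rewrite eyx; apply/negP; exact: gi.
    by rewrite (cardsD1 x A) xA.
  rewrite /c sum1dep_card -cardsE; apply: subset_leq_card; apply/subsetP => y.
  by rewrite !inE /= andbC.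
apply: (@leq_trans (\sum_(x in A) (#|A|.-1 + c x))); first by apply: leq_sum.
rewrite big_split /= sum_nat_const leq_add2l /c.
rewrite (pair_big_dep (fun x => x \in A) (fun x y => (y \notin A) && g x y) (fun _ _ => 1)) /=.
rewrite sum1dep_card.
set D := [set p | _].
rewrite -(@card_in_imset _ _ (fun p : 'I_n * 'I_n => [set p.1; p.2]) (mem D)).
  apply: subset_leq_card; apply/subsetP => S /imsetP [[x y]] /=.
  by rewrite inE /= => /andP[xA /andP[yA gxy]] ->; apply: hF.
move=> [x y] [x' y']; rewrite !inE /= => /andP[xA /andP[yA _]] /andP[xA' /andP[yA' _]] e.
have hx : x \in [set x'; y'] by rewrite -e !inE eqxx.
have hy : y \in [set x'; y'] by rewrite -e !inE eqxx orbT.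
move: hx hy; rewrite !inE => /orP[/eqP -> | /eqP exy]; last by move: xA; rewrite exy (negbTE yA').
move=> /orP[/eqP eyx | /eqP -> //]; by move: yA; rewrite eyx xA'.
Qed.

Lemma side_low n (g : rel 'I_n) (A : {set 'I_n}) c :
  (forall u, c <= deg g u) -> #|A| * c <= \sum_(x in A) deg g x.
Proof. by move=> h; rewrite -sum_nat_const; apply: leq_sum => u _. Qed.

Lemma arith_side s m f k : 0 < s -> s < m -> s * m.-1 <= s * s.-1 + f -> f < k -> 2 <= k -> k.*2 <= m.+1 -> False.
Proof.
move=> h1 h2 h3 h4 h5 h6.
have [s' es] : exists s', s = s'.+1 by exists s.-1; lia.
have [d ed] : exists d, m = s + d.+1 by exists (m - s.+1); lia.
subst s m.
have : s'.+1 * (s' + d.+1) <= s'.+1 * s' + f by move: h3; rewrite /= addnS /=.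
nia.
Qed.
Lemma arith a b s t f m k n : a <= s * s.-1 + f -> b <= t * t.-1 + f -> s * m.-1 <= a -> t * m.-1 <= b ->
  s + t = n -> 0 < s -> 0 < t -> f < k -> n = m + m -> 2 <= k -> k.*2 <= m.+1 ->
  m.-1 * n + (k.-1).*2 < a + b -> False.
Proof.
move=> h1 h2 h3 h4 h5 h6 h7 h8 h9 h10 h11 h12.
have [sm|sm|sm] := ltngtP s m.
- apply: (@arith_side s m f k) => //; lia.
- apply: (@arith_side t m f k) => //; lia.
- subst. have et : t = m by lia. subst. nia.
Qed.

Lemma force n m k (g : rel 'I_n) : simple_graph g -> n = m + m -> 2 <= k -> k.*2 <= m.+1 ->
  (forall u, m.-1 <= deg g u) -> m.-1 * n + (k.-1).*2 < \sum_u deg g u ->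
  k_edge_connected k g.
Proof.
move=> hg hn hk hm hdeg hsum F hF u v.
apply/negPn/negP => Hnc.
set h := remove_edges g F.
set S := [set w | connect h u w].
have key : forall A : {set 'I_n}, (forall x y, x \in A -> y \notin A -> ~~ h x y) ->
   forall x y, x \in A -> y \notin A -> g x y -> [set x; y] \in F.
  move=> A hA x y xA yA gxy; move: (hA x y xA yA); rewrite /h /remove_edges gxy /=.
  by rewrite negbK.
have hS : forall x y, x \in S -> y \notin S -> ~~ h x y.
  move=> x y; rewrite !inE => hx; apply: contra => hxy.
  by apply: connect_trans hx (connect1 hxy).
have hT : forall x y, x \in ~: S -> y \notin ~: S -> ~~ h x y.
  move=> x y; rewrite !inE negbK => hx hy; apply/negP => hxy; move/negP: hx; apply.
  apply: connect_trans hy (connect1 _).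
  by move: hxy; rewrite /h /remove_edges; case: hg => gs _; rewrite gs setUC.
have b1 := side_bound hg (key _ hS).
have b2 := side_bound hg (key _ hT).
have l1 := side_low S hdeg.
have l2 := side_low (~: S) hdeg.
have sp : #|S| + #|~: S| = n by rewrite cardsC card_ord.
have uS : u \in S by rewrite inE connect0.
have vS : v \in ~: S by rewrite !inE.
have s1 : 0 < #|S| by apply/card_gt0P; exists u.
have t1 : 0 < #|~: S| by apply/card_gt0P; exists v.
have tot : \sum_u deg g u = \sum_(x in S) deg g x + \sum_(x in ~: S) deg g x.
  rewrite (bigID (fun x => x \in S)) /=; congr (_ + _); by apply: eq_bigl => x; rewrite /= ?inE.
move: hsum; rewrite tot => hsum.
exact: (arith b1 b2 l1 l2 sp s1 t1 hF hn hk hm hsum).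
Qed.
Definition pre (l : seq nat) i := sumn (take i l).
Definition cross (m : nat) (l : seq nat) (a b : nat) : bool :=
  (a < m) && (m + pre l a <= b) && (b < m + pre l a.+1).
Definition Gn m l (a b : nat) : bool :=
  ((a < m) == (b < m)) && (a != b) || cross m l a b || cross m l b a.
Definition G n m l : rel 'I_n := fun u v => Gn m l u v.
Arguments G : clear implicits.
Definition ex m r l (i : nat) : nat := if i < m then nth 0 l i else (i - m < r).

Lemma pre_step l i : pre l i.+1 = pre l i + nth 0 l i.
Proof.
rewrite /pre; elim: l i => [|x l IH] [|i] /=; rewrite ?take0 ?addn0 //.
have := IH i; rewrite /pre => ->; by rewrite addnA.
Qed.

Lemma pre_mono l i j : i <= j -> pre l i <= pre l j.
Proof.
move=> /subnK <-; elim: (j - i) => [|d IH] //; rewrite addSn pre_step.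
by apply: leq_trans IH _; apply: leq_addr.
Qed.

Lemma pre_full l i : size l <= i -> pre l i = sumn l.
Proof. by move=> h; rewrite /pre take_oversize. Qed.

Lemma countA m l u n' : u < m ->
  count (Gn m l u) (iota 0 n') =
  (minn m n' - (u < n')) + (minn (m + pre l u.+1) n' - minn (m + pre l u) n').
Proof.
move=> hu; elim: n' => [|n' IH]; first by rewrite /=; lia.
rewrite count_iotaS IH /Gn /cross.
have := pre_mono l (leqnSn u).
have := pre_mono l (leqnSn n').
lia.
Qed.

Lemma countB m l u n' : m <= u ->
  count (Gn m l u) (iota 0 n') =
  ((n' - m) - (u < n')) + (u < m + pre l (minn m n')).
Proof.
move=> hu; elim: n' => [|n' IH]; first by rewrite /= minn0 /pre take0 /=; lia.
rewrite count_iotaS IH /Gn /cross.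
have := pre_mono l (leqnSn n').
case: (ltnP n' m) => h.
  have -> : minn m n'.+1 = n'.+1 by lia.
  lia.
have -> : minn m n'.+1 = m by lia.
lia.
Qed.

Lemma deg_G n m l (u : 'I_n) : n = m + m -> size l <= m -> sumn l <= m ->
  deg (G n m l) u = m.-1 + ex m (sumn l) l u.
Proof.
move=> hn hl hs; rewrite /deg (card_iota n (Gn m l u)) /ex.
have hu := ltn_ord u.
case: (ltnP u m) => h.
  rewrite countA // pre_step.
  have : pre l u.+1 <= pre l m by apply: pre_mono; lia.
  rewrite pre_step (pre_full (l:=l) (i:=m)) //.
  lia.
rewrite countB // (pre_full (l:=l)); last by lia.
lia.
Qed.

Lemma E_split m l n : n = m + m -> size l = sumn l -> sumn l <= m ->
  mkseq (ex m (sumn l) l) n = (l ++ nseq (m - sumn l) 0) ++ (nseq (sumn l) 1 ++ nseq (m - sumn l) 0).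
Proof.
move=> hn hl hs; apply: (@eq_from_nth _ 0).
  by rewrite size_mkseq !size_cat !size_nseq hl; lia.
move=> i; rewrite size_mkseq => hi.
rewrite nth_mkseq // /ex !nth_cat !size_cat !size_nseq hl.
case: (ltnP i m) => h1.
  have -> : i < sumn l + (m - sumn l) by lia.
  case: (ltnP i (sumn l)) => h2 //.
  by rewrite nth_nseq nth_default ?hl // if_same.
have -> : (i < sumn l + (m - sumn l)) = false by lia.
have -> : i - (sumn l + (m - sumn l)) = i - m by lia.
case: (ltnP (i - m) (sumn l)) => h2; first by rewrite nth_nseq h2.
by rewrite nth_nseq; case: ifP.
Qed.

Lemma degs_G n m l : n = m + m -> size l <= m -> sumn l <= m ->
  [seq deg (G n m l) u | u <- enum 'I_n] = [seq m.-1 + x | x <- mkseq (ex m (sumn l) l) n].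
Proof.
move=> hn hl hs.
rewrite (eq_map (fun u => deg_G u hn hl hs)).
by rewrite /mkseq -val_enum_ord -!map_comp.
Qed.

Lemma sumn_addmap c s : sumn [seq c + x | x <- s] = c * size s + sumn s.
Proof. by elim: s => [|x s IH] /=; [rewrite muln0 | rewrite IH mulnS; lia]. Qed.

Lemma Dl_sum n m l : n = m + m -> size l = sumn l -> sumn l <= m ->
  sumn (degseq (G n m l)) = m.-1 * n + (sumn l).*2.
Proof.
move=> hn hl hs.
rewrite /degseq (perm_sumn (permEl (perm_sort _ _))) degs_G //; last by rewrite hl.
rewrite sumn_addmap size_mkseq E_split // !sumn_cat !sumn_nseq.
rewrite mulnC; lia.
Qed.

Lemma Dl_ge n m l x : n = m + m -> size l <= m -> sumn l <= m ->
  x \in degseq (G n m l) -> m.-1 <= x.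
Proof.
move=> hn hl hs; rewrite /degseq mem_sort degs_G // => /mapP [y _ ->].
exact: leq_addr.
Qed.

Lemma Dl_inj n m r l l' : n = m + m -> r <= m ->
  size l = r -> sumn l = r -> sorted geq l ->
  size l' = r -> sumn l' = r -> sorted geq l' ->
  degseq (G n m l) = degseq (G n m l') -> l = l'.
Proof.
move=> hn hr h1 h2 h3 h1' h2' h3' e.
have p : perm_eq [seq deg (G n m l) u | u <- enum 'I_n] [seq deg (G n m l') u | u <- enum 'I_n].
  rewrite -(perm_sort leq) -/(degseq _) e /degseq perm_sort perm_refl //.
have s1 : size l <= m by rewrite h1.
have s2 : sumn l <= m by rewrite h2.
have s1' : size l' <= m by rewrite h1'.
have s2' : sumn l' <= m by rewrite h2'.
have s3 : size l = sumn l by rewrite h1 h2.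
have s3' : size l' = sumn l' by rewrite h1' h2'.
rewrite !degs_G // in p.
move/(perm_map_inj (@addnI _)): p.
rewrite !E_split // h2 h2' perm_cat2r perm_cat2r => p.
apply: (sorted_eq _ _ h3 h3' p).
  by move=> a b c hab hbc; apply: leq_trans hbc hab.
by move=> a b /andP[x y]; apply/eqP; rewrite eqn_leq; apply/andP; split.
Qed.

Lemma cross_uniq m l a a' b : cross m l a b -> cross m l a' b -> a = a'.
Proof.
rewrite /cross => /andP[/andP[ha h1] h2] /andP[/andP[ha' h1'] h2'].
case: (ltngtP a a') => // h.
  have := pre_mono l h; lia.
have := pre_mono l h; lia.
Qed.

Lemma count_range lo hi n' : lo <= hi ->
  count (fun v => lo <= v < hi) (iota 0 n') = minn hi n' - minn lo n'.
Proof.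
move=> h; elim: n' => [|n' IH]; first by rewrite /=; lia.
by rewrite count_iotaS IH /=; lia.
Qed.

Lemma closed_conn n (e : rel 'I_n) (A : pred 'I_n) :
  (forall x y, A x -> e x y -> A y) -> forall x y, connect e x y -> A x -> A y.
Proof.
move=> h x y /connectP [p hp ->]; elim: p x hp => //= z p IH x /andP[exz hp] Ax.
exact: IH hp (h _ _ Ax exz).
Qed.

Lemma G_not_kec n m l k : n = m + m -> 0 < m -> size l <= m -> sumn l <= m -> sumn l < k ->
  ~ k_edge_connected k (G n m l).
Proof.
move=> hn hm hl hs hk hc.
pose F := [set [set odflt v [pick a : 'I_n | cross m l a v]; v] | v : 'I_n
            & m <= v < m + sumn l].
have inF : forall x y : 'I_n, cross m l x y -> [set x; y] \in F.
  move=> x y hxy; apply/imsetP; exists y.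
    rewrite inE /=; move: hxy; rewrite /cross => /andP[/andP[hx h1] h2].
    have : pre l x.+1 <= pre l m by apply: pre_mono.
    rewrite (pre_full (l:=l) (i:=m)) //; lia.
  case: pickP => [a ha | hn0] /=; last by move: (hn0 x); rewrite hxy.
  by rewrite (val_inj (cross_uniq ha hxy)).
have cF : #|F| < k.
  apply: leq_ltn_trans (leq_imset_card _ _) _.
  have := card_iota n (fun v => m <= v < m + sumn l).
  rewrite count_range; last exact: leq_addr.
  move=> e; apply: (@leq_ltn_trans (minn (m + sumn l) n - minn m n)); last by lia.
  rewrite -e; apply: eq_leq; apply: eq_card => v; by rewrite !inE.
have h0 : 0 < n by lia.
have hm' : m < n by lia.
have := hc F cF (Ordinal h0) (Ordinal hm').
set h := remove_edges _ _.
move=> hcon.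
have cl : forall x y : 'I_n, x < m -> h x y -> y < m.
  move=> x y /= hx; rewrite /h /remove_edges /G /Gn => /andP[hg hnF].
  case: (ltnP y m) => // hy.
  move: hg; rewrite hx /= ltnNge hy /=.
  have -> : cross m l y x = false by rewrite /cross ltnNge hy.
  rewrite orbF => hxy.
  by move: hnF; rewrite inF.
have := @closed_conn n h (fun w => w < m) cl _ _ hcon hm.
by rewrite /= ltnn.
Qed.

Lemma G_simple n m l : simple_graph (G n m l).
Proof.
split.
  move=> u v; rewrite /G /Gn eq_sym (eq_sym (val u)).
  by case: (cross m l u v); case: (cross m l v u); rewrite ?orbT ?orbF.
move=> u; rewrite /G /Gn eqxx /= /cross.
rewrite eqxx /=; lia.
Qed.

Lemma all2_lower (a b : seq nat) c : all2 leq a b -> (forall x, x \in a -> c <= x) ->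
  forall y, y \in b -> c <= y.
Proof.
elim: a b => [|x a IH] [|z b] //= /andP[h1 h2] ha y.
rewrite inE => /orP[/eqP -> | hy].
  by apply: leq_trans (ha x _) h1; rewrite inE eqxx.
by apply: (IH b h2) => // w hw; apply: ha; rewrite inE hw orbT.
Qed.

Lemma lemmaK n m r l l' d : n = m + m -> 1 <= r -> (r.+1).*2 <= m.+1 ->
  size l = r -> sumn l = r -> sorted geq l ->
  size l' = r -> sumn l' = r -> sorted geq l' -> l <> l' ->
  majorizes d (degseq (G n m l)) -> majorizes d (degseq (G n m l')) ->
  forcibly (k_edge_connected r.+1) n d.
Proof.
move=> hn hr hm h1 h2 h3 h1' h2' h3' hne [_ ma] [_ ma'] g [hg hdg].
have rm : r <= m by lia.
have sl : size l <= m by rewrite h1.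
have sl2 : sumn l <= m by rewrite h2.
have sl' : size l' <= m by rewrite h1'.
have sl2' : sumn l' <= m by rewrite h2'.
have s3 : size l = sumn l by rewrite h1 h2.
have s3' : size l' = sumn l' by rewrite h1' h2'.
apply: (force hg hn _ hm).
- by lia.
- move=> u; apply: (all2_lower ma).
    by move=> x hx; apply: (Dl_ge hn sl sl2 hx).
  by rewrite -hdg /degseq mem_sort; apply: map_f; rewrite mem_enum.
- rewrite -sumn_degseq hdg /=.
  have e1 := Dl_sum hn s3 sl2.
  have e2 := Dl_sum hn s3' sl2'.
  have le1 := all2_sumn ma.
  rewrite h2 in e1; rewrite h2' in e2.
  rewrite ltn_neqAle; apply/andP; split; last by rewrite -e1.
  apply/eqP => e; apply: hne.
  apply: (Dl_inj hn rm h1 h2 h3 h1' h2' h3').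
  rewrite (all2_sumn_eq ma); last by rewrite e1.
  by rewrite (all2_sumn_eq ma'); last by rewrite e2.
Qed.

Section Main.
Variables (n m r : nat).
Hypotheses (hn : n = m + m) (hr : 1 <= r) (hm : (r.+1).*2 <= m.+1).

Definition Pset := [set t : r.-tuple 'I_r.+1 |
       sorted geq [seq val i | i <- t] && (sumn [seq val i | i <- t] == r)].
Definition Dt (t : r.-tuple 'I_r.+1) := degseq (G n m [seq val i | i <- t]).

Lemma Pset_facts t : t \in Pset ->
  [/\ size [seq val i | i <- t] = r, sumn [seq val i | i <- t] = r & sorted geq [seq val i | i <- t]].
Proof. by rewrite inE => /andP[h1 /eqP h2]; rewrite size_map size_tuple. Qed.

Lemma Dt_nf t : t \in Pset -> not_forcibly (k_edge_connected r.+1) n (Dt t).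
Proof.
move=> /Pset_facts [h1 h2 h3].
have rm : r <= m by lia.
split; first by exists (G n m [seq val i | i <- t]); split => //; apply: G_simple.
move=> hf; have := hf _ (conj (G_simple n m _) erefl).
apply: G_not_kec => //; try lia; by rewrite ?h1 ?h2.
Qed.

Lemma build (X : seq (r.-tuple 'I_r.+1)) : uniq X -> {subset X <= Pset} ->
  exists L, [/\ uniq L, size L = size X &
     forall s, s \in L -> sink (k_edge_connected r.+1) n s /\ exists2 t, t \in X & majorizes s (Dt t)].
Proof.
elim: X => [|x X IH] /=; first by move=> _ _; exists [::].
move=> /andP[xX uX] sub.
have [L [uL sL hL]] := IH uX (fun y hy => sub y (mem_behead (s := x :: X) hy)).
have xP : x \in Pset by apply: sub; rewrite inE eqxx.
have [s [hs ms]] := sink_above (Dt_nf xP).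
have sL' : s \notin L.
  apply/negP => /hL [_ [y yX my]].
  have yP : y \in Pset by apply: sub; rewrite inE yX orbT.
  have [h1 h2 h3] := Pset_facts xP.
  have [h1' h2' h3'] := Pset_facts yP.
  have hne : [seq val i | i <- x] <> [seq val i | i <- y].
    move=> e; move: xX; suff -> : x = y by rewrite yX.
    by apply: val_inj; apply: (inj_map val_inj).
  have := lemmaK hn hr hm h1 h2 h3 h1' h2' h3' hne ms my.
  by case: hs => [[_ hnf] _].
exists (s :: L); split => //=; first by rewrite sL' uL.
  by rewrite sL.
move=> s'; rewrite inE => /orP[/eqP -> | hs'].
  by split => //; exists x => //; rewrite inE eqxx.
have [h1 [y yX my]] := hL _ hs'; split => //; exists y => //; by rewrite inE yX orbT.
Qed.

End Main.

Unset Implicit Arguments.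

Theorem theorem3p1p3 (k n : nat) :
  2 <= k -> 4 * k - 2 <= n -> ~~ odd n ->
  exists L : seq (seq nat),
    [/\ uniq L, (forall d, d \in L -> sink (k_edge_connected k) n d)
      & partition_number (k - 1) <= size L].
Proof.
move=> hk hn hodd.
have [r er] : exists r, k = r.+1 by exists k.-1; lia.
subst k.
have hr : 1 <= r by lia.
set m := n./2.
have hnm : n = m + m by move: (odd_double_half n); rewrite (negbTE hodd) /= -addnn.
have hm : (r.+1).*2 <= m.+1 by lia.
have sub : {subset enum (Pset r) <= Pset r} by move=> t; rewrite mem_enum.
have [L [uL sL hL]] := build hnm hr hm (enum_uniq (mem (Pset r))) sub.
exists L; split => //.
  by move=> d /hL [].
rewrite subn1 /= sL -cardE /partition_number /Pset.
by [].
Qed.
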